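(* Let $\Gamma$ and $\Gamma'$ be connected strongly regular graphs with the same parameters $(n,k,a,c)$, with vertex sets $X$, $X'$, and let $x\in X$, $x'\in X'$. Let $i\in\{1,2\}$. Let $v\in E^*_i(x)V$ be an eigenvector of $E^*_i(x)AE^*_i(x)$ with eigenvalue $\lambda$ such that $\langle \mathbf{1},v\rangle=0$, and let $v'\in E'^*_i(x')V'$ be an eigenvector of $E'^*_i(x')A'E'^*_i(x')$ with eigenvalue $\lambda'$ such that $\langle \mathbf{1},v'\rangle=0$. Then $\lambda=\lambda'$ if and only if there exists a $\mathbb{C}$-linear bijection $\rho:T(x)v\to T'(x')v'$ with $\rho Aw=A'\rho w$ and $\rho E^*_j(x)w=E'^*_j(x')\rho w$ for all $w\in T(x)v$ and all $j$.
   Context: A strongly regular graph with parameters $(n,k,a,c)$ is a $k$-regular graph on $n$ vertices in which every pair of adjacent vertices has exactly $a$ common neighbours and every pair of distinct non-adjacent vertices has exactly $c$ common neighbours. For $\Gamma$ with vertex set $X$, distance $\partial$ and diameter $D$, let $A$ be its adjacency matrix, $V=\mathbb{C}^X$ with the standard Hermitian inner product $\langle u,w\rangle=u^t\overline{w}$, $\mathbf{1}$ the all-ones vector, and $E^*_j(x)$ ($0\le j\le D$) the diagonal matrix with $(E^*_j(x))_{yy}=1$ if $\partial(x,y)=j$ and $0$ otherwise. The Terwilliger algebra $T(x)$ is the subalgebra of $\mathrm{Mat}_X(\mathbb{C})$ generated by $A,E^*_0(x),\dots,E^*_D(x)$, and $T(x)v=\{Bv:B\in T(x)\}$. The same notation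 with primes is used for $\Gamma'$. *)

(* Defs.v *)
From mathcomp Require Import all_boot all_order all_algebra.
From mathcomp Require Export algC.
Set Implicit Arguments. Unset Strict Implicit. Unset Printing Implicit Defensive.
Import Order.TTheory GRing.Theory Num.Theory.
Local Open Scope ring_scope.

Section Graphs.
Variable n : nat.

Definition srg (k a c : nat) (e : rel 'I_n) : Prop :=
  [/\ symmetric e, irreflexive e,
      (forall x, #|[set y | e x y]| = k),
      (forall x y, e x y -> #|[set z | e x z && e y z]| = a)
    & (forall x y, x != y -> ~~ e x y -> #|[set z | e x z && e y z]| = c)].

Definition connected_graph (e : rel 'I_n) : Prop := forall x y, connect e x y.

Definition walkb (e : rel 'I_n) (x y : 'I_n) (j : nat) : bool :=
  [exists p : j.-tuple 'I_n, path e x p && (last x p == y)].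

(* path-length distance (least length of a walk; = n if unreachable) *)
Definition gdist (e : rel 'I_n) (x y : 'I_n) : nat :=
  find (walkb e x y) (iota 0 n).

Definition diam (e : rel 'I_n) : nat :=
  (\max_(y : 'I_n) \max_(z : 'I_n) gdist e y z)%N.

Definition adjmx (e : rel 'I_n) : 'M[algC]_n :=
  \matrix_(y, z) (e y z)%:R.

Definition dualidem (e : rel 'I_n) (x : 'I_n) (j : nat) : 'M[algC]_n :=
  \matrix_(y, z) ((y == z) && (gdist e x y == j))%:R.

Inductive in_alg (gens : seq 'M[algC]_n) : 'M[algC]_n -> Prop :=
  | in_alg_gen B : B \in gens -> in_alg gens B
  | in_alg_one : in_alg gens 1%:M
  | in_alg_add B C : in_alg gens B -> in_alg gens C -> in_alg gens (B + C)
  | in_alg_scale (al : algC) B : in_alg gens B -> in_alg gens (al *: B)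
  | in_alg_mul B C : in_alg gens B -> in_alg gens C -> in_alg gens (B *m C).

(* generators of the Terwilliger algebra T(x): A, E^*_0(x), ..., E^*_D(x) *)
Definition terw_gens (e : rel 'I_n) (x : 'I_n) : seq 'M[algC]_n :=
  adjmx e :: [seq dualidem e x j | j <- iota 0 (diam e).+1].

Definition in_Tmod (e : rel 'I_n) (x : 'I_n) (v w : 'cV[algC]_n) : Prop :=
  exists B, in_alg (terw_gens e x) B /\ w = B *m v.

Definition ip_one (v : 'cV[algC]_n) : algC := \sum_(y < n) (v y 0)^*.

Definition Tmod_iso (e : rel 'I_n) (x : 'I_n) (v : 'cV[algC]_n)
    (e' : rel 'I_n) (x' : 'I_n) (v' : 'cV[algC]_n)
    (rho : 'cV[algC]_n -> 'cV[algC]_n) : Prop :=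
  [/\ (forall (al : algC) u w, in_Tmod e x v u -> in_Tmod e x v w ->
         rho (al *: u + w) = al *: rho u + rho w) /\
      (forall u, in_Tmod e x v u -> in_Tmod e' x' v' (rho u)),
      (forall u w, in_Tmod e x v u -> in_Tmod e x v w -> rho u = rho w -> u = w),
      (forall w', in_Tmod e' x' v' w' -> (exists w, in_Tmod e x v w /\ rho w = w')),
      (forall w, in_Tmod e x v w -> rho (adjmx e *m w) = adjmx e' *m rho w)
    & (forall (j : nat) w, in_Tmod e x v w ->
         rho (dualidem e x j *m w) = dualidem e' x' j *m rho w)].

End Graphs.

(* Main.v *)
Set Warnings "-notation-overridden,-ambiguous-paths,-notation-incompatible-prefix".
Require Import Defs.
From mathcomp Require Import all_boot all_order all_algebra.
From mathcomp Require Import algC zify ring.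
From Stdlib Require Import Lia.
Import GRing.Theory Num.Theory.
Local Open Scope ring_scope.
Set Implicit Arguments. Unset Strict Implicit.

Lemma walk0 n (e : rel 'I_n) x y : walkb e x y 0 = (x == y).
Proof.
apply/existsP/idP => [[p /andP[_ /eqP <-]]|/eqP->]; first by rewrite tuple0.
by exists [tuple]; rewrite /= eqxx.
Qed.

Lemma walk1 n (e : rel 'I_n) x y : walkb e x y 1 = e x y.
Proof.
apply/existsP/idP => [[p]|H]; last by exists [tuple y]; rewrite /= H eqxx.
case: p => [[|z [|]]] //= _; by rewrite andbT => /andP[H /eqP <-].
Qed.

Lemma walk2 n (e : rel 'I_n) x y : walkb e x y 2 = [exists z, e x z && e z y].
Proof.
apply/existsP/existsP => [[p]|[z /andP[H1 H2]]]; last by exists [tuple z; y]; rewrite /= H1 H2 eqxx.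
case: p => [[|z [|t [|]]]] //= _; rewrite andbT => /andP[/andP[H1 H2] /eqP E].
by exists z; rewrite H1 -E H2.
Qed.

Lemma find_iota_gen (P : pred nat) m : find P (iota 0 m) =
  if m is 0 then 0%N else if P 0 then 0%N else
  if m is 1 then 1%N else if P 1 then 1%N else
  if m is 2 then 2%N else if P 2 then 2%N else (3 + find P (iota 3 (m - 3)))%N.
Proof.
case: m => [|[|[|m]]] //=; case: (P 0) => //; case: (P 1) => //; case: (P 2) => //=.
by rewrite (_ : (m.+3 - 3 = m)%N) //; lia.
Qed.

Lemma ord1_eq n (x y : 'I_n) : (n <= 1)%N -> x = y.
Proof. move=> H; apply/val_inj; case: x H; case: y => /= y Hy x Hx H; lia. Qed.


Lemma fi0 (P : pred nat) m : (0 < m)%N -> (find P (iota 0 m) == 0%N) = P 0%N.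
Proof. by case: m => // m _ /=; case: (P 0%N). Qed.
Lemma fi1 (P : pred nat) m : (1 < m)%N -> (find P (iota 0 m) == 1%N) = ~~ P 0%N && P 1%N.
Proof. by case: m => [|[|m]] // _ /=; case: (P 0%N); case: (P 1%N). Qed.
Lemma fi1' (P : pred nat) : (find P (iota 0 1) == 1%N) = ~~ P 0%N.
Proof. by rewrite /=; case: (P 0%N). Qed.
Lemma fi2 (P : pred nat) m : (2 < m)%N -> (find P (iota 0 m) == 2%N) = [&& ~~ P 0%N, ~~ P 1%N & P 2%N].
Proof. by case: m => [|[|[|m]]] // _ /=; case: (P 0%N); case: (P 1%N); case: (P 2%N). Qed.
Lemma fi2' (P : pred nat) : (find P (iota 0 2) == 2%N) = ~~ P 0%N && ~~ P 1%N.
Proof. by rewrite /=; case: (P 0%N); case: (P 1%N). Qed.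
Lemma fi2'' (P : pred nat) : (find P (iota 0 1) == 2%N) = false.
Proof. by rewrite /=; case: (P 0%N). Qed.

Lemma gdist0 n (e : rel 'I_n) x y : (gdist e x y == 0%N) = (x == y).
Proof. by rewrite /gdist fi0 ?walk0 // (leq_ltn_trans (leq0n _) (ltn_ord x)). Qed.

Lemma gdist1 n (e : rel 'I_n) x y : irreflexive e -> (gdist e x y == 1%N) = e x y.
Proof.
move=> irr; rewrite /gdist; case: (ltnP 1 n) => Hn.
  rewrite fi1 // walk0 walk1; case: eqP => // ->; by rewrite irr.
have {}Hn : n = 1%N by have := ltn_ord x; lia.
move: e x y irr; rewrite Hn => e x y irr; rewrite fi1' walk0 (ord1_eq x y) ?eqxx ?irr //.
Qed.

Lemma gdist2a n (e : rel 'I_n) x y : irreflexive e -> gdist e x y == 2%N -> (x != y) && ~~ e x y.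
Proof. by move=> irr /eqP H; rewrite -(gdist0 e) -(gdist1 _ _ irr) H. Qed.

Lemma gdist2b n (e : rel 'I_n) x y : irreflexive e -> x != y -> ~~ e x y ->
  ((n <= 2)%N || [exists z, e x z && e z y]) -> gdist e x y == 2%N.
Proof.
move=> irr ne ne2 H; rewrite /gdist; case: (ltnP 2 n) => Hn.
  by rewrite fi2 // walk0 walk1 walk2 ne ne2 /=; move: H; rewrite leqNgt Hn.
have [Hn1|Hn2] : n = 1%N \/ n = 2%N by have := ltn_ord x; lia.
  by move: e x y irr ne ne2 H; rewrite Hn1 => e x y irr; rewrite (ord1_eq x y) ?eqxx.
by move: e x y irr ne ne2 H; rewrite Hn2 => e x y irr ne ne2 _; rewrite fi2' walk0 walk1 ne ne2.
Qed.

Lemma gdist2c n (e : rel 'I_n) x y : gdist e x y == 2%N -> (2 < n)%N -> [exists z, e x z && e z y].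
Proof. by rewrite /gdist => H Hn; move: H; rewrite fi2 // walk2 => /and3P[]. Qed.

Lemma EmulE n (e : rel 'I_n) x j (u : 'cV[algC]_n) y :
  (dualidem e x j *m u) y 0 = (gdist e x y == j)%:R * u y 0.
Proof.
rewrite mxE (bigD1 y) //= mxE eqxx /= big1 ?addr0 // => z /negbTE nz.
by rewrite mxE eq_sym nz mul0r.
Qed.

Lemma AmulE n (e : rel 'I_n) (u : 'cV[algC]_n) y :
  (adjmx e *m u) y 0 = \sum_z (e y z)%:R * u z 0.
Proof. by rewrite mxE; apply: eq_bigr => z _; rewrite mxE. Qed.

Lemma cVP n (u u' : 'cV[algC]_n) : (forall y, u y 0 = u' y 0) -> u = u'.
Proof. by move=> H; apply/matrixP => y z; rewrite (ord1 z). Qed.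

Lemma sum_delta n (y : 'I_n) (f : 'I_n -> algC) : \sum_t (y == t)%:R * f t = f y.
Proof.
rewrite (bigD1 y) //= eqxx mul1r big1 ?addr0 // => t /negbTE.
by rewrite eq_sym => ->; rewrite mul0r.
Qed.

Lemma comb_add n (v w : 'cV[algC]_n) a1 b1 a2 b2 :
  (a1 *: v + b1 *: w) + (a2 *: v + b2 *: w) = (a1 + a2) *: v + (b1 + b2) *: w.
Proof. by rewrite !scalerDl addrACA. Qed.

Lemma comb_scale n (v w : 'cV[algC]_n) al a1 b1 :
  al *: (a1 *: v + b1 *: w) = (al * a1) *: v + (al * b1) *: w.
Proof. by rewrite scalerDr !scalerA. Qed.

Lemma nonzero_entry n (v : 'cV[algC]_n) : v != 0 -> exists y, v y 0 != 0.
Proof.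
move=> vnz; case: (pickP (fun y => v y 0 != 0)) => [y0 H|H]; first by exists y0.
case/eqP: vnz; apply: cVP => y; rewrite mxE.
by have := H y; rewrite /= => /negbFE/eqP.
Qed.

Lemma one_graph n k a c (e : rel 'I_n) x i (v : 'cV[algC]_n) lam :
  srg k a c e -> (i = 1%N \/ i = 2%N) -> (exists u, v = dualidem e x i *m u) -> v != 0 ->
  dualidem e x i *m adjmx e *m dualidem e x i *m v = lam *: v -> ip_one v = 0 ->
  let w := adjmx e *m v - lam *: v in
  let mu := k%:R - c%:R + (a%:R - c%:R - lam) * lam in
  [/\ (forall j, dualidem e x j *m v = if j == i then v else 0),
      (forall j, dualidem e x j *m w = if j == (3 - i)%N then w else 0),
      adjmx e *m w = mu *: v + (a%:R - c%:R - lam) *: w,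
      (forall u, in_Tmod e x v u <-> exists al be, u = al *: v + be *: w)
    & (w = 0 <-> mu = 0)].
Proof.
move=> [Hsym Hirr Hk Ha Hc] Hi [u0 Hv] vnz Heig Hip w mu.
have wdef : w = adjmx e *m v - lam *: v by [].
have mudef : mu = k%:R - c%:R + (a%:R - c%:R - lam) * lam by [].
clearbody w mu.
have vE y : v y 0 = (gdist e x y == i)%:R * v y 0.
  by rewrite Hv !EmulE mulrA -natrM mulnb andbb.
have Ev j : dualidem e x j *m v = if j == i then v else 0.
  apply: cVP => y; rewrite EmulE; case: (eqVneq j i) => [->|ne]; first by rewrite -vE.
  rewrite mxE vE mulrA -natrM mulnb.
  by case: (eqVneq (gdist e x y) j) => [->|]; rewrite ?(negbTE ne) mul0r.
have Hsum : \sum_y v y 0 = 0.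
  by apply/eqP; rewrite -conjC_eq0 rmorph_sum /=; apply/eqP.
have Heig' y : (gdist e x y == i)%:R * (adjmx e *m v) y 0 = lam * v y 0.
  move: Heig; rewrite -!mulmxA (Ev i) eqxx => /matrixP /(_ y 0).
  by rewrite EmulE => ->; rewrite mxE.
have wE y : w y 0 = (adjmx e *m v) y 0 - lam * v y 0 by rewrite wdef !mxE.
have [y0 Hy0] := nonzero_entry vnz.
have gy0 : gdist e x y0 == i.
  by apply/negPn/negP => H; move: Hy0; rewrite vE (negbTE H) mul0r eqxx.
have Hall2 : i = 2%N -> forall y, x != y -> ~~ e x y -> gdist e x y == 2%N.
  move=> i2 y ne ne2; apply: gdist2b => //; case: (leqP n 2) => //= Hn.
  move: gy0; rewrite i2 => gy0; have /andP[ne0 ne20] := gdist2a Hirr gy0.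
  have /existsP[z /andP[z1 z2]] := gdist2c gy0 Hn.
  have cpos : (0 < c)%N.
    rewrite -(Hc x y0 ne0 ne20) card_gt0; apply/set0Pn; exists z.
    by rewrite inE z1 Hsym.
  move: cpos; rewrite -(Hc x y ne ne2) card_gt0 => /set0Pn[t]; rewrite inE => /andP[t1 t2].
  by apply/existsP; exists t; rewrite t1 Hsym.
have wsupp y : gdist e x y != (3 - i)%N -> w y 0 = 0.
  move=> Hg; rewrite wE.
  case: (eqVneq (gdist e x y) i) => [Hgi|Hgi].
    by rewrite -Heig' Hgi eqxx mul1r subrr.
  rewrite vE (negbTE Hgi) mul0r mulr0 subr0 AmulE.
  case: Hi => Hi; subst i.
    case: (eqVneq x y) => [<-|nxy].
      rewrite -[RHS]Hsum; apply: eq_bigr => z _.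
      by rewrite vE (gdist1 _ _ Hirr) mulrA -natrM mulnb andbb.
    apply: big1 => z _; rewrite vE (gdist1 _ _ Hirr) mulrA -natrM mulnb.
    case H: (e y z && e x z); last by rewrite mul0r.
    move/andP: H => [h1 h2]; move: Hgi; rewrite (gdist1 _ _ Hirr) => ne2.
    have H2 : gdist e x y == 2%N.
      apply: gdist2b Hirr nxy ne2 _; apply/orP; right; apply/existsP; exists z; by rewrite h2 Hsym.
    by move/eqP: H2 Hg => ->.
  case: (eqVneq x y) => [<-|nxy].
    apply: big1 => z _; rewrite vE; case Hz: (gdist e x z == 2%N); last by rewrite mul0r mulr0.
    by have /andP[_ /negbTE ->] := gdist2a Hirr Hz; rewrite mul0r.
  by move: Hg; rewrite (gdist1 _ _ Hirr) => ne2; move: Hgi; rewrite Hall2.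
have Ew j : dualidem e x j *m w = if j == (3 - i)%N then w else 0.
  have wE2 y : w y 0 = (gdist e x y == (3 - i)%N)%:R * w y 0.
    by case: eqP => [_|/eqP H]; rewrite ?mul1r // mul0r wsupp.
  apply: cVP => y; rewrite EmulE; case: (eqVneq j (3 - i)%N) => [->|ne]; first by rewrite -wE2.
  rewrite mxE wE2 mulrA -natrM mulnb.
  by case: (eqVneq (gdist e x y) j) => [->|]; rewrite ?(negbTE ne) mul0r.
have Ncoef y t : \sum_z (e y z)%:R * (e z t)%:R =
    (c%:R + (k%:R - c%:R) * (y == t)%:R + (a%:R - c%:R) * (e y t)%:R : algC).
  have -> : \sum_z (e y z)%:R * (e z t)%:R = (#|[set z | e y z && e t z]|)%:R :> algC.
    rewrite -sum1dep_card natr_sum [RHS]big_mkcond /=; apply: eq_bigr => z _.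
    by rewrite -natrM mulnb (Hsym z t); case: (_ && _).
  case: (eqVneq y t) => [<-|ne].
    rewrite Hirr (eq_card (B := [set z | e y z])) ?Hk; last by move=> z; rewrite !inE andbb.
    rewrite mulr1 mulr0 addr0; ring.
  case H: (e y t); first by rewrite (Ha _ _ H) mulr0 mulr1 addr0; ring.
  by rewrite (Hc _ _ ne (negbT H)) !mulr0 !addr0.
have AAv : adjmx e *m (adjmx e *m v) = (k%:R - c%:R) *: v + (a%:R - c%:R) *: (adjmx e *m v).
  apply: cVP => y.
  have -> : (adjmx e *m (adjmx e *m v)) y 0 = \sum_t (\sum_z (e y z)%:R * (e z t)%:R) * v t 0.
    rewrite AmulE (eq_bigr (fun z => \sum_t (e y z)%:R * ((e z t)%:R * v t 0))); last first.
      by move=> z _; rewrite AmulE mulr_sumr.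
    rewrite exchange_big /=; apply: eq_bigr => t _; rewrite mulr_suml; apply: eq_bigr => z _.
    by rewrite mulrA.
  under eq_bigr => t _ do rewrite Ncoef !mulrDl -!mulrA.
  have -> : ((k%:R - c%:R) *: v + (a%:R - c%:R) *: (adjmx e *m v)) y 0 =
     (k%:R - c%:R) * v y 0 + (a%:R - c%:R) * (adjmx e *m v) y 0 by rewrite !mxE.
  rewrite !big_split /= -!mulr_sumr sum_delta Hsum -AmulE mulr0 add0r; ring.
have Aw : adjmx e *m w = mu *: v + (a%:R - c%:R - lam) *: w.
  rewrite wdef mulmxBr -scalemxAr AAv mudef.
  move: (adjmx e *m v) => Av; apply: cVP => y; rewrite !mxE; ring.
have Av : adjmx e *m v = lam *: v + 1 *: w by rewrite wdef scale1r addrC subrK.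
have Tmod u : in_Tmod e x v u <-> exists al be, u = al *: v + be *: w.
  split.
    move=> [B [HB ->]].
    suff: exists a1 b1 a2 b2, B *m v = a1 *: v + b1 *: w /\ B *m w = a2 *: v + b2 *: w.
      by move=> [a1 [b1 [_ [_ [-> _]]]]]; exists a1, b1.
    elim: HB => {B}.
    - move=> B; rewrite inE => /orP[/eqP->|/mapP[j _ ->]].
        by exists lam, 1, mu, (a%:R - c%:R - lam).
      exists (j == i)%:R, 0, 0, (j == (3-i)%N)%:R; rewrite Ev Ew.
      by split; case: eqP => _; rewrite ?scale1r ?scale0r ?addr0 ?add0r.
    - by exists 1, 0, 0, 1; rewrite !mul1mx !scale1r !scale0r addr0 add0r.
    - move=> B C _ [a1 [b1 [a2 [b2 [H1 H2]]]]] _ [a3 [b3 [a4 [b4 [H3 H4]]]]].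
      exists (a1 + a3), (b1 + b3), (a2 + a4), (b2 + b4).
      by rewrite !mulmxDl H1 H2 H3 H4 !comb_add.
    - move=> al B _ [a1 [b1 [a2 [b2 [H1 H2]]]]].
      exists (al * a1), (al * b1), (al * a2), (al * b2).
      by rewrite -!scalemxAl H1 H2 !comb_scale.
    - move=> B C _ [a1 [b1 [a2 [b2 [H1 H2]]]]] _ [a3 [b3 [a4 [b4 [H3 H4]]]]].
      rewrite -!mulmxA H3 H4 !mulmxDr -!scalemxAr H1 H2 !comb_scale !comb_add.
      by eexists _, _, _, _.
  move=> [al [be ->]].
  exists (al *: 1%:M + be *: (adjmx e + (- lam) *: 1%:M)); split.
    apply: in_alg_add; apply: in_alg_scale; first exact: in_alg_one.
    apply: in_alg_add; first by apply: in_alg_gen; rewrite inE eqxx.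
    by apply: in_alg_scale; exact: in_alg_one.
  by rewrite mulmxDl -!scalemxAl mul1mx mulmxDl -scalemxAl mul1mx wdef scaleNr.
split => //; split.
  move=> w0; move: Aw; rewrite w0 mulmx0 scaler0 addr0 => /esym/eqP.
  by rewrite scaler_eq0 (negbTE vnz) orbF => /eqP.
move=> mu0.
have orth : \sum_y (w y 0)^* * v y 0 = 0.
  apply: big1 => y _; rewrite [v y 0]vE.
  case: (eqVneq (gdist e x y) i) => [Hg|]; last by rewrite mul0r mulr0.
  rewrite (wsupp y) ?rmorph0 ?mul0r // Hg; by case: Hi => ->.
have Hwv : \sum_y (w y 0)^* * (adjmx e *m v) y 0 = 0.
  transitivity (\sum_z ((adjmx e *m w) z 0)^* * v z 0).
    rewrite (eq_bigr (fun y => \sum_z (w y 0)^* * ((e y z)%:R * v z 0))); last first.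
      by move=> y _; rewrite AmulE mulr_sumr.
    rewrite exchange_big /=; apply: eq_bigr => z _.
    rewrite AmulE rmorph_sum /= mulr_suml; apply: eq_bigr => y _.
    by rewrite rmorphM /= conjC_nat (Hsym z y); ring.
  rewrite Aw mu0 scale0r add0r.
  rewrite (eq_bigr (fun z => (a%:R - c%:R - lam)^* * ((w z 0)^* * v z 0))); last first.
    by move=> z _; rewrite mxE rmorphM mulrA.
  by rewrite -mulr_sumr orth mulr0.
have Hww : \sum_y (w y 0)^* * w y 0 = 0.
  rewrite (eq_bigr (fun y => (w y 0)^* * (adjmx e *m v) y 0 - lam * ((w y 0)^* * v y 0))); last first.
    by move=> y _; rewrite wE; ring.
  by rewrite sumrB -mulr_sumr Hwv orth mulr0 subr0.
apply: cVP => y; rewrite mxE.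
have H0 : w y 0 * (w y 0)^* = 0.
  apply: (@psumr_eq0P _ _ xpredT (fun t => w t 0 * (w t 0)^*)) => //.
    by move=> t _; exact: mul_conjC_ge0.
  by rewrite -[RHS]Hww; apply: eq_bigr => t _; rewrite mulrC.
by apply/eqP; rewrite -mul_conjC_eq0 H0.
Qed.

Lemma entry_supp n (e : rel 'I_n) x j (u : 'cV[algC]_n) y :
  dualidem e x j *m u = u -> u y 0 = (gdist e x y == j)%:R * u y 0.
Proof. by move=> H; rewrite -{1}H EmulE. Qed.

Lemma A_comb n (A : 'M[algC]_n) (v w : 'cV[algC]_n) l m b al be :
  A *m v = l *: v + w -> A *m w = m *: v + b *: w ->
  A *m (al *: v + be *: w) = (al * l + be * m) *: v + (al + be * b) *: w.
Proof.
move=> H1 H2; rewrite mulmxDr -!scalemxAr H1 H2.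
by apply: cVP => y; rewrite !mxE; ring.
Qed.

Lemma B_comb n (B : 'M[algC]_n) (v w : 'cV[algC]_n) p q al be :
  B *m v = p *: v -> B *m w = q *: w ->
  B *m (al *: v + be *: w) = (al * p) *: v + (be * q) *: w.
Proof.
move=> H1 H2; rewrite mulmxDr -!scalemxAr H1 H2.
by apply: cVP => y; rewrite !mxE; ring.
Qed.

Lemma if_scale n (j i : nat) (v : 'cV[algC]_n) : (if j == i then v else 0) = (j == i)%:R *: v.
Proof. by case: eqP; rewrite ?scale1r ?scale0r. Qed.

Unset Implicit Arguments. Set Strict Implicit.

Theorem lemma5p10 (n k a c : nat) (e e' : rel 'I_n) (x x' : 'I_n) (i : nat)
    (v v' : 'cV[algC]_n) (lam lam' : algC) :
  srg k a c e -> connected_graph e ->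
  srg k a c e' -> connected_graph e' ->
  (i = 1%N \/ i = 2%N) ->
  (exists u, v = dualidem e x i *m u) -> v != 0 ->
  dualidem e x i *m adjmx e *m dualidem e x i *m v = lam *: v ->
  ip_one v = 0 ->
  (exists u', v' = dualidem e' x' i *m u') -> v' != 0 ->
  dualidem e' x' i *m adjmx e' *m dualidem e' x' i *m v' = lam' *: v' ->
  ip_one v' = 0 ->
  (lam = lam' <-> exists rho, Tmod_iso e x v e' x' v' rho).
Proof.
move=> srg1 _ srg2 _ Hi Hv vnz Heig Hip Hv' vnz' Heig' Hip'.
have ni : (i == (3 - i)%N) = false by case: Hi => ->.
have := one_graph srg1 Hi Hv vnz Heig Hip => /=.
have Av : adjmx e *m v = lam *: v + (adjmx e *m v - lam *: v) by rewrite addrC subrK.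
move: Av; move: (adjmx e *m v - lam *: v) => w Av [Ev Ew Aw Tm W0].
have := one_graph srg2 Hi Hv' vnz' Heig' Hip' => /=.
have Av' : adjmx e' *m v' = lam' *: v' + (adjmx e' *m v' - lam' *: v') by rewrite addrC subrK.
move: Av'; move: (adjmx e' *m v' - lam' *: v') => w' Av' [Ev' Ew' Aw' Tm' W0'].
have Eiv : dualidem e x i *m v = v by rewrite Ev eqxx.
have Eiv' : dualidem e' x' i *m v' = v' by rewrite Ev' eqxx.
have Ejw : dualidem e x (3 - i)%N *m w = w by rewrite Ew eqxx.
have Ejw' : dualidem e' x' (3 - i)%N *m w' = w' by rewrite Ew' eqxx.
have [y0 Hy0] := nonzero_entry vnz.
have [y0' Hy0'] := nonzero_entry vnz'.
have gy0 : gdist e x y0 == i.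
  apply/negPn/negP => H; move: Hy0; rewrite (entry_supp y0 Eiv) (negbTE H).
  by rewrite mul0r eqxx.
have gy0' : gdist e' x' y0' == i.
  apply/negPn/negP => H; move: Hy0'; rewrite (entry_supp y0' Eiv') (negbTE H).
  by rewrite mul0r eqxx.
have wy0 : w y0 0 = 0.
  by rewrite (entry_supp y0 Ejw) (eqP gy0) ni mul0r.
have wy0' : w' y0' 0 = 0.
  by rewrite (entry_supp y0' Ejw') (eqP gy0') ni mul0r.
split.
  move=> El; subst lam'.
  have W : w = 0 <-> w' = 0 by rewrite W0 W0'.
  have [y1 Hy1] : exists y1, (w = 0 /\ w' = 0) \/ (w y1 0 != 0 /\ v y1 0 = 0).
    case: (eqVneq w 0) => [w0|wnz]; first by exists y0; left; split => //; apply/W.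
    have [y1 Hy1] := nonzero_entry wnz; exists y1; right; split => //.
    have gy1 : gdist e x y1 == (3 - i)%N.
      apply/negPn/negP => H; move: Hy1; rewrite (entry_supp y1 Ejw) (negbTE H).
      by rewrite mul0r eqxx.
    by rewrite (entry_supp y1 Eiv) (eqP gy1) eq_sym ni mul0r.
  pose rho (u : 'cV[algC]_n) := (u y0 0 / v y0 0) *: v' + (u y1 0 / w y1 0) *: w'.
  have rhoE al be : rho (al *: v + be *: w) = al *: v' + be *: w'.
    rewrite /rho !mxE wy0 mulr0 addr0 mulfK //.
    case: Hy1 => [[w0 w0']|[wy1 vy1]]; first by rewrite w0' !scaler0.
    by rewrite vy1 mulr0 add0r mulfK.
  have rhoL al u u2 : rho (al *: u + u2) = al *: rho u + rho u2.
    by apply: cVP => y; rewrite /rho !mxE; ring.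
  exists rho; split.
  - split => [al u u2 _ _|u]; first exact: rhoL.
    by move=> /Tm [al [be ->]]; rewrite rhoE; apply/Tm'; exists al, be.
  - move=> u u2 /Tm [al [be ->]] /Tm [al2 [be2 ->]]; rewrite !rhoE => H.
    have Hal : al = al2.
      move/matrixP: H => /(_ y0' 0); rewrite !mxE wy0' !mulr0 !addr0.
      by move/(mulIf Hy0').
    subst al2; move/addrI: H => H.
    case: (eqVneq w' 0) => [w0'|wnz'].
      have w0 : w = 0 by apply/W.
      by rewrite w0 !scaler0.
    have : (be - be2) *: w' = 0 by rewrite scalerBl H subrr.
    move/eqP; rewrite scaler_eq0 (negbTE wnz') orbF subr_eq0 => /eqP ->.
    by [].
  - by move=> w2 /Tm' [al [be ->]]; exists (al *: v + be *: w); split; [apply/Tm; exists al, be|].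
  - move=> u /Tm [al [be ->]].
    by rewrite (A_comb _ _ Av Aw) !rhoE (A_comb _ _ Av' Aw').
  - move=> j u /Tm [al [be ->]].
    have Hv1 := Ev j; have Hw1 := Ew j; have Hv2 := Ev' j; have Hw2 := Ew' j.
    rewrite if_scale in Hv1; rewrite if_scale in Hw1; rewrite if_scale in Hv2; rewrite if_scale in Hw2.
    by rewrite (B_comb _ _ Hv1 Hw1) !rhoE (B_comb _ _ Hv2 Hw2).
move=> [rho [[lin into] inj surj HA HE]].
have Tv : in_Tmod e x v v by apply/Tm; exists 1, 0; rewrite scale1r scale0r addr0.
have Tw : in_Tmod e x v w by apply/Tm; exists 0, 1; rewrite scale1r scale0r add0r.
have T0 : in_Tmod e x v 0 by apply/Tm; exists 0, 0; rewrite !scale0r addr0.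
have rho0 : rho 0 = 0.
  have := lin 1 0 0 T0 T0; rewrite scale1r addr0.
  rewrite scale1r; by move/(congr1 (fun z => z - rho 0)); rewrite subrr addrK => <-.
have [al [be Hr]] := (Tm' (rho v)).1 (into v Tv).
have Eiw' : dualidem e' x' i *m w' = 0 by rewrite Ew' ni.
have rv : rho v = al *: v'.
  have := HE i v Tv; rewrite Ev eqxx => ->.
  by rewrite Hr mulmxDr -!scalemxAr Eiw' Eiv' scaler0 addr0.
have alnz : al != 0.
  apply/negP => /eqP al0; move: vnz; rewrite (inj v 0 Tv T0) ?eqxx //.
  by rewrite rv al0 scale0r rho0.
have Erw : dualidem e' x' i *m rho w = 0.
  by rewrite -(HE i w Tw) Ew ni rho0.
have H := HA v Tv; rewrite Av lin // rv -scalemxAr Av' in H.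
move/(congr1 (mulmx (dualidem e' x' i))): H.
rewrite !mulmxDr -!scalemxAr !mulmxDr -!scalemxAr Erw Eiv' Eiw' ?scaler0 ?addr0 !scalerA => H.
have : (lam * al - al * lam') *: v' = 0 by rewrite scalerBl H subrr.
move/eqP; rewrite scaler_eq0 (negbTE vnz') orbF mulrC -mulrBr mulf_eq0 (negbTE alnz) /=.
by rewrite subr_eq0 => /eqP.
Qed.
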